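(* Let $\gamma=\gamma_1\cup\gamma_2$ be a finite set of interactions with $\mathit{Act}(\gamma_1)\cap\mathit{Act}(\gamma_2)=\emptyset$. Then $\mathcal{E}(\gamma)\equiv\mathcal{E}(\gamma_1)\wedge\mathcal{E}(\gamma_2)$, i.e. the two formulas are satisfied by exactly the same assignments of real values to the history clocks $h_a$, $a\in\mathit{Act}(\gamma)$.
   Context: An interaction is a finite nonempty set of actions; for a set of interactions $\gamma$, $\mathit{Act}(\gamma)=\bigcup_{\alpha\in\gamma}\alpha$. Each action $a$ has an associated real variable (history clock) $h_a$. For a set of interactions $\gamma$ and a set of actions $\alpha$, $\gamma\ominus\alpha=\{\beta\setminus\alpha\mid\beta\in\gamma,\ \beta\not\subseteq\alpha\}$. Define recursively $\mathcal{E}(\emptyset)=\mathit{true}$ and, for $\gamma\neq\emptyset$, $\mathcal{E}(\gamma)=\bigvee_{\alpha\in\gamma}\Big(\bigwedge_{a_i,a_j\in\alpha}h_{a_i}=h_{a_j}\ \wedge\bigwedge_{a_i\in\alpha,\ a_k\in\mathit{Act}(\gamma\ominus\alpha)}h_{a_i}\le h_{a_k}\ \wedge\ \mathcal{E}(\gamma\ominus\alpha)\Big)$. *)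

(* Defs.v *)
From HB Require Import structures.
From mathcomp Require Import all_boot all_order all_algebra.
Set Implicit Arguments. Unset Strict Implicit. Unset Printing Implicit Defensive.
Import Order.TTheory GRing.Theory Num.Theory.

(* Actions range over a finite type A; an interaction is a (nonempty) set of
   actions, a set of interactions is an element of {set {set A}}. *)

Definition Act (A : finType) (g : {set {set A}}) : {set A} :=
  \bigcup_(b in g) b.

Definition ominus (A : finType) (g : {set {set A}}) (a : {set A}) : {set {set A}} :=
  [set b :\: a | b in [set b in g | ~~ (b \subset a)]].

(* Satisfaction of the formula E(gamma) by the clock valuation h : A -> R.
   E is defined by well-founded recursion (|gamma (-) alpha| < |gamma| for
   alpha in gamma); we give its semantics as the inductive predicate
   corresponding to the recursive clauses:
     E(empty) = true,
     E(gamma) = \/_{alpha in gamma} ( /\_{ai,aj in alpha} h ai = h aj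
                  /\ /\_{ai in alpha, ak in Act(gamma (-) alpha)} h ai <= h ak
                  /\ E(gamma (-) alpha) ). *)
Inductive Esat (A : finType) (R : realFieldType) (h : A -> R)
  : {set {set A}} -> Prop :=
| Esat_nil : Esat h set0
| Esat_step (g : {set {set A}}) (a : {set A}) :
    a \in g ->
    (forall ai aj, ai \in a -> aj \in a -> h ai = h aj) ->
    (forall ai ak, ai \in a -> ak \in Act (ominus g a) -> (h ai <= h ak)%R) ->
    Esat h (ominus g a) ->
    Esat h g.

(* Main.v *)
Require Import Defs.
From HB Require Import structures.
From mathcomp Require Import all_boot all_order all_algebra.
Set Implicit Arguments. Unset Strict Implicit. Unset Printing Implicit Defensive.
Import Order.TTheory GRing.Theory Num.Theory.

Section Aux.
Variable A : finType.
Implicit Types (g : {set {set A}}) (a b : {set A}).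

Lemma Act_ominus g a : Act (ominus g a) = Act g :\: a.
Proof.
apply/setP => x; rewrite !inE /Act.
apply/bigcupP/andP.
  move=> [c /imsetP [b]]; rewrite inE => /andP [bg _] -> .
  rewrite inE => /andP [xa xb]; split => //; apply/bigcupP; by exists b.
move=> [xa /bigcupP [b bg xb]]; exists (b :\: a); last by rewrite inE xa.
apply/imsetP; exists b => //; rewrite inE bg /=.
by apply/negP => /subsetP /(_ x xb); rewrite (negbTE xa).
Qed.

Lemma ominusU g1 g2 a : ominus (g1 :|: g2) a = ominus g1 a :|: ominus g2 a.
Proof.
rewrite /ominus -imsetU.
have -> : [set b in g1 :|: g2 | ~~ (b \subset a)] =
  [set b in g1 | ~~ (b \subset a)] :|: [set b in g2 | ~~ (b \subset a)].
  apply/setP => b; rewrite !inE.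
  by rewrite andb_orl.
by [].
Qed.

Lemma sub_Act g b : b \in g -> b \subset Act g.
Proof. by move=> bg; apply: (bigcup_sup b). Qed.

Lemma ominus_id g a : set0 \notin g -> [disjoint a & Act g] -> ominus g a = g.
Proof.
move=> g0 dis.
have key : forall b, b \in g -> b :\: a = b /\ ~~ (b \subset a).
  move=> b bg.
  have db : [disjoint b & a].
    by apply: disjointWl (sub_Act bg) _; rewrite disjoint_sym.
  split; first by apply/setDidPl.
  apply: (subsetC_disjoint db) => //.
  by apply/eqP => E; move: g0; rewrite -E bg.
apply/setP => b; apply/imsetP/idP.
  by move=> [c]; rewrite inE => /andP [cg _] ->; rewrite (key c cg).1.
move=> bg; exists b; last by rewrite (key b bg).1.
by rewrite inE bg (key b bg).2.
Qed.

Lemma ominus_no0 g a : set0 \notin ominus g a.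
Proof.
apply/imsetP => [[b]]; rewrite inE => /andP [_ nb] /esym /eqP.
by rewrite setD_eq0 (negbTE nb).
Qed.

Lemma card_ominus g a : a \in g -> #|ominus g a| < #|g|.
Proof.
move=> ag; apply: leq_ltn_trans (leq_imset_card _ _) _.
apply: proper_card; apply/properP; split.
  by apply/subsetP => b; rewrite inE => /andP [].
by exists a => //; rewrite inE ag subxx.
Qed.

Lemma Act_U g1 g2 : Act (g1 :|: g2) = Act g1 :|: Act g2.
Proof. by rewrite /Act bigcup_setU. Qed.

Lemma dis_sub g1 g2 a : a \in g1 -> [disjoint Act g1 & Act g2] ->
  [disjoint a & Act g2].
Proof. by move=> ag dis; apply: disjointWl (sub_Act ag) dis. Qed.

Lemma dis_ominus g1 g2 a : [disjoint Act g1 & Act g2] ->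
  [disjoint Act (ominus g1 a) & Act g2].
Proof. by move=> dis; rewrite Act_ominus; apply: disjointWl (subsetDl _ _) dis. Qed.

End Aux.

Section Main.
Variables (A : finType) (R : realFieldType) (h : A -> R).
Implicit Types (g : {set {set A}}) (a b : {set A}).

Lemma minAct g a x y : a \in g ->
  (forall ai aj, ai \in a -> aj \in a -> h ai = h aj) ->
  (forall ai ak, ai \in a -> ak \in Act (ominus g a) -> (h ai <= h ak)%R) ->
  x \in a -> y \in Act g -> (h x <= h y)%R.
Proof.
move=> ag eqa lea xa yg.
case ya: (y \in a); first by rewrite (eqa x y).
by apply: lea => //; rewrite Act_ominus inE ya.
Qed.

Lemma Esat_split g : Esat h g -> forall g1 g2, g = g1 :|: g2 ->
  set0 \notin g1 -> set0 \notin g2 -> [disjoint Act g1 & Act g2] ->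
  Esat h g1 /\ Esat h g2.
Proof.
elim => [|g0 a ag eqa lea _ IH] g1 g2 E n1 n2 dis.
  move/esym/eqP: E; rewrite setU_eq0 => /andP [/eqP -> /eqP ->].
  by split; constructor.
subst g0.
have [E1 E2] : Esat h (ominus g1 a) /\ Esat h (ominus g2 a).
  apply: IH; rewrite ?ominusU ?ominus_no0 //.
  by rewrite !Act_ominus; apply: disjointW dis; apply: subsetDl.
have lea' : forall gi : {set {set A}}, gi \subset g1 :|: g2 ->
   forall ai ak, ai \in a -> ak \in Act (ominus gi a) -> (h ai <= h ak)%R.
  move=> gi sub ai ak aia akg; apply: lea => //.
  move: akg; rewrite !Act_ominus !inE => /andP [-> /bigcupP [b bg akb]].
  by apply/bigcupP; exists b => //; apply: (subsetP sub).
case/setUP: ag => ag.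
  rewrite ominus_id // in E2; last exact: dis_sub ag dis.
  split => //; apply: (Esat_step ag eqa _ E1); apply: lea'; exact: subsetUl.
rewrite ominus_id // in E1; last by apply: dis_sub ag _; rewrite disjoint_sym.
split => //; apply: (Esat_step ag eqa _ E2); apply: lea'; exact: subsetUr.
Qed.

Lemma peel g1 g2 a : a \in g1 ->
  (forall ai aj, ai \in a -> aj \in a -> h ai = h aj) ->
  (forall ai ak, ai \in a -> ak \in Act (ominus g1 a) -> (h ai <= h ak)%R) ->
  (forall ai ak, ai \in a -> ak \in Act g2 -> (h ai <= h ak)%R) ->
  set0 \notin g2 -> [disjoint Act g1 & Act g2] ->
  Esat h (ominus g1 a :|: g2) -> Esat h (g1 :|: g2).
Proof.
move=> ag eqa lea bnd n2 dis E.
have om : ominus (g1 :|: g2) a = ominus g1 a :|: g2.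
  by rewrite ominusU (ominus_id n2 (dis_sub ag dis)).
apply: (Esat_step (a := a)); rewrite ?om //; first by rewrite inE ag.
move=> ai ak aia; rewrite Act_U inE => /orP [] akg; [exact: lea | exact: bnd].
Qed.

Lemma Esat_join n : forall g1 g2, #|g1| + #|g2| < n ->
  set0 \notin g1 -> set0 \notin g2 -> [disjoint Act g1 & Act g2] ->
  Esat h g1 -> Esat h g2 -> Esat h (g1 :|: g2).
Proof.
elim: n => [|n IH] g1 g2 //= Hn n1 n2 dis E1 E2.
destruct E1 as [|g1 a1 ag1 eq1 le1 E1']; first by rewrite set0U.
destruct E2 as [|g2 a2 ag2 eq2 le2 E2']; first by rewrite setU0; apply: (Esat_step ag1 eq1 le1 E1').
have [x1 x1a] : exists x, x \in a1.
  by apply/set0Pn; apply/eqP => E; move: n1; rewrite -E ag1.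
have [x2 x2a] : exists x, x \in a2.
  by apply/set0Pn; apply/eqP => E; move: n2; rewrite -E ag2.
have [le12|lt21] := leP (h x1) (h x2).
  apply: (peel ag1 eq1 le1) => //.
    move=> ai ak aia akg; rewrite (eq1 ai x1) //.
    by apply: le_trans le12 _; apply: (minAct ag2 eq2 le2).
  apply: IH; rewrite ?ominus_no0 ?dis_ominus //;
    last exact: (Esat_step ag2 eq2 le2 E2').
  by rewrite -ltnS; apply: leq_trans _ Hn; rewrite ltnS ltn_add2r card_ominus.
rewrite setUC.
apply: (peel ag2 eq2 le2) => //; last 1 first.
- apply: IH; rewrite ?ominus_no0 ?dis_ominus 1?disjoint_sym //;
    last exact: (Esat_step ag1 eq1 le1 E1').
  by rewrite -ltnS; apply: leq_trans _ Hn; rewrite ltnS addnC ltn_add2l card_ominus.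
- move=> ai ak aia akg; rewrite (eq2 ai x2) //.
  by apply: le_trans (ltW lt21) _; apply: (minAct ag1 eq1 le1).
- by rewrite disjoint_sym.
Qed.
End Main.

Theorem proposition3 (A : finType) (R : realFieldType)
  (g1 g2 : {set {set A}}) :
  set0 \notin g1 -> set0 \notin g2 ->
  [disjoint Act g1 & Act g2] ->
  forall h : A -> R, Esat h (g1 :|: g2) <-> (Esat h g1 /\ Esat h g2).
Proof.
move=> n1 n2 dis h; split.
  by move=> E; apply: (Esat_split E).
move=> [E1 E2]; exact: (@Esat_join _ _ h (#|g1| + #|g2|).+1).
Qed.
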